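(* Let $\mathcal C=\{\tau_k\mid k\in\mathcal K\}$ be a translation-based cipher on $V=(\mathbb F_2)^n=V_1\oplus\cdots\oplus V_b$, $V_j\cong(\mathbb F_2)^m$, with $\ell$ rounds, round maps $\gamma_h,\lambda_h$ ($1\le h\le \ell$) and key-schedule $\Phi:\mathcal K\to V^\ell$. Suppose $\Phi$ is 3-round independent at round $i$ for some $2\le i\le \ell-1$. Suppose that every S-box $f$ composing the parallel maps $\gamma_i$ and $\gamma_{i+1}$ is (1) differentially $2^r$-uniform, with $r<m$, and (2) strongly $(r-1)$-anti-invariant, and that $\lambda_i$ is strongly proper. Then there do not exist non-trivial partitions $\mathcal A,\mathcal B$ of $V$ such that for all $k\in\mathcal K$ the map $\tau_k$ maps $\mathcal A$ onto $\mathcal B$. In particular, $\Gamma(\mathcal C)=\langle\tau_k\mid k\in\mathcal K\rangle$ is primitive.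
   Context: Let $m,b>1$, $n=mb$, and $V=(\mathbb F_2)^n=V_1\oplus\cdots\oplus V_b$ with each $V_j\cong(\mathbb F_2)^m$. Permutations act on the right ($v\mapsto v\gamma$); $\sigma_v$ denotes the translation $x\mapsto x+v$. A parallel map is $\gamma\in\mathrm{Sym}(V)$ with $(v_1\oplus\cdots\oplus v_b)\gamma=v_1\gamma_1\oplus\cdots\oplus v_b\gamma_b$ for fixed permutations $\gamma_j$ of $V_j$ (the S-boxes). A wall is a subspace $\bigoplus_{j\in I}V_j$ with $\emptyset\ne I\subsetneq\{1,\dots,b\}$. A linear map $\lambda\in\mathrm{GL}(V)$ is strongly proper if no wall is mapped by $\lambda$ into a wall (including itself). A translation-based (tb) cipher with $\ell$ rounds: for each round $h$ there is a parallel map $\gamma_h$ with $0\gamma_h=0$ and $\lambda_h\in\mathrm{GL}(V)$, both independent of the key; a key-schedule $\Phi:\mathcal K\to V^\ell$, $k\mapsto(k_1,\dots,k_\ell)$; and the encryption function is $\tau_k=\gamma_1\lambda_1\sigma_{k_1}\gamma_2\lambda_2\sigma_{k_2}\cdots\gamma_\ell\lambda_\ell\sigma_{k_\ell}$. $\Phi$ is 3-round independent at round $i$ if there are fixed $\bar k_j\in V$ ($j\notin\{i-1,i,i+1\}$) such that for every $(k_{i-1},k_i,k_{i+1})\in V^3$ the tuple $(\bar k_1,\dots,\bar k_{i-2},k_{i-1},k_i,k_{i+1},\bar k_{i+2},\dots,\bar k_\ell)$ lies in $\mathrm{Im}(\Phi)$. For $f:(\mathbb F_2)^m\to(\mathbb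 F_2)^m$, $\delta_f(a,b)=|\{x: f(x+a)+f(x)=b\}|$ and $f$ is differentially $\delta$-uniform if $\delta=\max_{a\ne0,b}\delta_f(a,b)$. For $f$ with $f(0)=0$, $f$ is strongly $r$-anti-invariant if whenever $U,W$ are subspaces of $(\mathbb F_2)^m$ with $f(U)=W$, either $\dim U=\dim W<m-r$ or $U=W=(\mathbb F_2)^m$. A permutation $\rho$ maps a partition $\mathcal A$ onto a partition $\mathcal B$ if $\{A\rho: A\in\mathcal A\}=\mathcal B$. A partition of $V$ is trivial if it is $\{\{v\}:v\in V\}$ or $\{V\}$. A transitive group $G\le\mathrm{Sym}(V)$ is primitive if it preserves no non-trivial partition of $V$. *)

(* Defs.v *)
From HB Require Import structures.
From mathcomp Require Import all_boot all_order all_algebra all_fingroup all_solvable.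
Set Implicit Arguments. Unset Strict Implicit. Unset Printing Implicit Defensive.
Import GRing.Theory.
Local Open Scope ring_scope.

(* The message space V = (F_2)^n, n = m*b, is modelled as the space of b x m
   matrices over F_2: row j of x : 'M['F_2]_(b,m) is the j-th brick component
   x_j in V_j = (F_2)^m. *)
Notation V b m := ('M['F_2]_(b, m)) (only parsing).

Definition parallel (b m : nat) (g : {perm 'M['F_2]_(b, m)})
    (S : 'I_b -> 'rV['F_2]_m -> 'rV['F_2]_m) :=
  forall (x : 'M['F_2]_(b, m)) (j : 'I_b), row j (g x) = S j (row j x).

Definition linear_perm (b m : nat) (l : {perm 'M['F_2]_(b, m)}) :=
  forall (a : 'F_2) (x y : 'M['F_2]_(b, m)), l (a *: x + y) = a *: l x + l y.

Definition wall (b m : nat) (I : {set 'I_b}) : {set 'M['F_2]_(b, m)} :=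
  [set x | [forall j, (j \notin I) ==> (row j x == 0)]].

Definition is_wall_index (b : nat) (I : {set 'I_b}) := (I != set0) && (I != setT).

Definition strongly_proper (b m : nat) (l : {perm 'M['F_2]_(b, m)}) :=
  forall I J : {set 'I_b}, is_wall_index I -> is_wall_index J ->
    ~ (l @: wall m I \subset wall m J).

Definition transl (b m : nat) (v : 'M['F_2]_(b, m)) : {perm 'M['F_2]_(b, m)} :=
  perm (@addIr _ v).

(* tau_k = gamma_1 lambda_1 sigma_{k_1} ... gamma_l lambda_l sigma_{k_l};
   permutations act on the right, as in MathComp ((s * t) x = t (s x)). *)
Definition encryption (b m l : nat) (g lam : 'I_l -> {perm 'M['F_2]_(b, m)})
    (kk : 'I_l -> 'M['F_2]_(b, m)) : {perm 'M['F_2]_(b, m)} :=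
  (\prod_(h < l) (g h * lam h * transl (kk h)))%g.

(* 3-round independence at round i (rounds indexed 0..l-1 here) *)
Definition three_round_indep (b m l : nat) (K : Type)
    (Phi : K -> 'I_l -> 'M['F_2]_(b, m)) (i : nat) :=
  exists kbar : 'I_l -> 'M['F_2]_(b, m),
    forall k3 : 'I_l -> 'M['F_2]_(b, m),
      exists k : K, forall h : 'I_l,
        Phi k h = (if (i.-1 <= h <= i.+1)%N then k3 h else kbar h).

Definition ddt (m : nat) (f : 'rV['F_2]_m -> 'rV['F_2]_m) (a c : 'rV['F_2]_m) : nat :=
  #|[set x : 'rV['F_2]_m | f (x + a) + f x == c]|.

Definition diff_uniform (m : nat) (f : 'rV['F_2]_m -> 'rV['F_2]_m) (d : nat) :=
  d = (\max_(p : 'rV['F_2]_m * 'rV['F_2]_m | p.1 != (0 : 'rV['F_2]_m)%R) ddt f p.1 p.2)%N.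

(* strongly r-anti-invariant; subspaces of (F_2)^m are represented by the
   row spaces of m x m matrices (mxalgebra). *)
Definition subsp (m : nat) (U : 'M['F_2]_m) : {set 'rV['F_2]_m} :=
  [set x | (x <= U)%MS].

Definition strongly_anti_invariant (m : nat) (f : 'rV['F_2]_m -> 'rV['F_2]_m) (r : nat) :=
  f 0 = 0 /\
  forall U W : 'M['F_2]_m, f @: subsp U = subsp W ->
    ((\rank U = \rank W /\ (\rank U < m - r)%N) \/ (\rank U = m /\ \rank W = m)).

Definition trivial_partition (T : finType) (P : {set {set T}}) :=
  P = [set [set x] | x : T] \/ P = [set setT].

Definition maps_partition (T : finType) (t : {perm T}) (A B : {set {set T}}) :=
  [set t @: X | X : {set T} in A] = B.

(* Main.v *)
Require Import Defs.
From HB Require Import structures.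
From mathcomp Require Import all_boot all_order all_algebra all_fingroup all_solvable.
From mathcomp Require Import mxabelem.
From mathcomp Require Import zify.
Set Implicit Arguments. Unset Strict Implicit. Unset Printing Implicit Defensive.
Import GRing.Theory.
Local Open Scope ring_scope.

Lemma F2xx (a : 'F_2) : a + a = 0.
Proof. by apply: addrr_pchar2; apply: pchar_Fp. Qed.

Lemma addxx b m (x : 'M['F_2]_(b, m)) : x + x = 0.
Proof. by apply/matrixP => i j; rewrite !mxE F2xx. Qed.

Lemma rowD' b m (k : 'I_b) (x y : 'M['F_2]_(b, m)) : row k (x + y) = row k x + row k y.
Proof. by apply/rowP => l; rewrite !mxE. Qed.

Definition emb b m (j : 'I_b) (v : 'rV['F_2]_m) : 'M['F_2]_(b, m) :=
  \matrix_(k, l) (if k == j then v ord0 l else 0).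

Lemma row_emb b m (j k : 'I_b) (v : 'rV['F_2]_m) :
  row k (emb j v) = if k == j then v else 0.
Proof. by apply/rowP => l; rewrite !mxE; case: ifP => //; rewrite mxE. Qed.

Lemma emb0 b m (j : 'I_b) : emb j (0 : 'rV['F_2]_m) = 0.
Proof. by apply/matrixP => k l; rewrite !mxE; case: ifP. Qed.

Lemma embD b m (j : 'I_b) (v w : 'rV['F_2]_m) : emb j (v + w) = emb j v + emb j w.
Proof. by apply/matrixP => k l; rewrite !mxE; case: ifP; rewrite ?mxE ?addr0. Qed.

Lemma emb_inj b m (j : 'I_b) : injective (@emb b m j).
Proof. by move=> v w /(congr1 (row j)); rewrite !row_emb eqxx. Qed.

Lemma mx_decomp b m (x : 'M['F_2]_(b, m)) : x = \sum_j emb j (row j x).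
Proof.
apply/matrixP => k l; rewrite summxE (bigD1 k) //= mxE eqxx mxE big1 ?addr0 //.
by move=> j /negbTE; rewrite mxE eq_sym => ->.
Qed.

Lemma char2_eq b m (x y : 'M['F_2]_(b, m)) : (x + y == 0) = (x == y).
Proof.
apply/eqP/eqP => [h|->]; last exact: addxx.
by rewrite -[x]addr0 -(addxx y) addrA h add0r.
Qed.

Lemma rv_char2_eq m (x y : 'rV['F_2]_m) : (x + y == 0) = (x == y).
Proof. exact: char2_eq. Qed.


Lemma par_f0 b m (g : {perm 'M['F_2]_(b, m)}) S (hpar : parallel g S) (hg0 : g 0 = 0) j :
  S j 0 = 0.
Proof. by have := hpar 0 j; rewrite hg0 !row0 => <-. Qed.

Definition upd b m (x : 'M['F_2]_(b, m)) (j : 'I_b) (v : 'rV['F_2]_m) : 'M['F_2]_(b, m) :=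
  \matrix_(k, l) (if k == j then v ord0 l else x k l).

Lemma row_upd b m (x : 'M['F_2]_(b, m)) j v k : row k (upd x j v) = if k == j then v else row k x.
Proof. by apply/rowP => l; rewrite !mxE; case: ifP => //; rewrite mxE. Qed.

Lemma par_inj b m (g : {perm 'M['F_2]_(b, m)}) S (hpar : parallel g S) j :
  injective (S j).
Proof.
move=> v w h.
have : upd 0 j v = upd 0 j w.
  apply: (@perm_inj _ g); apply/row_matrixP => k.
  rewrite !hpar !row_upd; case: ifP => [/eqP -> //|//].
by move/(congr1 (row j)); rewrite !row_upd eqxx.
Qed.

Lemma par_emb b m (g : {perm 'M['F_2]_(b, m)}) S (hpar : parallel g S) (hg0 : g 0 = 0) j v :
  g (emb j v) = emb j (S j v).
Proof.
apply/row_matrixP => k; rewrite hpar !row_emb; case: eqP => [->//|_].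
exact: par_f0 hpar hg0 k.
Qed.

Lemma card_rV m : #|{: 'rV['F_2]_m}| = (2 ^ m)%N.
Proof. by rewrite card_mx card_Fp // mul1n. Qed.

Lemma count_ddt m (f : 'rV['F_2]_m -> 'rV['F_2]_m) a (Y : {set 'rV['F_2]_m}) d :
  (forall c, (ddt f a c <= d)%N) -> (forall x, f (x + a) + f x \in Y) ->
  (2 ^ m <= #|Y| * d)%N.
Proof.
move=> hd hY; rewrite -card_rV -[X in (X <= _)%N]sum1_card.
rewrite (partition_big (fun x => f (x + a) + f x) (mem Y)) //=.
rewrite -sum_nat_const; apply: leq_sum => c _.
apply: leq_trans (hd c); rewrite /ddt -sum1_card; apply: eq_leq; apply: eq_bigl => x.
by rewrite inE.
Qed.

Lemma grp_set m (L : {set 'rV['F_2]_m}) :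
  0 \in L -> (forall u v, u \in L -> v \in L -> u + v \in L) -> group_set L.
Proof.
move=> L0 LD; apply/group_setP; split => [|x y xL yL]; first exact: L0.
exact: LD.
Qed.

Lemma subsp_rowg m (L : {set 'rV['F_2]_m}) (L0 : 0 \in L)
  (LD : forall u v, u \in L -> v \in L -> u + v \in L) :
  subsp (rowg_mx L) = L.
Proof.
have := rowg_mxK (Group (grp_set L0 LD)); rewrite /subsp /rowg /= => ->. by [].
Qed.

Lemma card_subsp m (W : 'M['F_2]_m) : #|subsp W| = (2 ^ \rank W)%N.
Proof. by have := card_rowg W; rewrite card_Fp. Qed.

Lemma brick m r (f : 'rV['F_2]_m -> 'rV['F_2]_m) (hr : (r < m)%N) (finj : injective f)
  (hdu : forall a c, a != 0 -> (ddt f a c <= 2 ^ r)%N)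
  (hai : strongly_anti_invariant f (r - 1))
  (Uj Xj : {set 'rV['F_2]_m}) (U0 : 0 \in Uj)
  (UD : forall u v, u \in Uj -> v \in Uj -> u + v \in Uj)
  (X0 : 0 \in Xj) (XD : forall u v, u \in Xj -> v \in Xj -> u + v \in Xj)
  (himg : f @: Uj = Xj) (hD : forall x a, a \in Uj -> f (x + a) + f x \in Xj) :
  Uj = [set 0] \/ Uj = setT.
Proof.
have [f0 hai'] := hai.
have := hai' (rowg_mx Uj) (rowg_mx Xj).
rewrite !subsp_rowg // => /(_ himg) [[eqr ltr]|[eqU _]]; last first.
  right; apply/eqP; rewrite eqEcard subsetT /= cardsT card_rV.
  by rewrite -(subsp_rowg U0 UD) card_subsp eqU.
left; apply/eqP; rewrite eqEsubset sub1set U0 andbT; apply/subsetP => a aU.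
rewrite inE; apply/negPn/negP => a0.
have := count_ddt (hdu a^~ a0) (Y := Xj :\ 0) _.
have -> : #|Xj :\ 0| = (2 ^ \rank (rowg_mx Xj) - 1)%N.
  by rewrite -card_subsp subsp_rowg // (cardsD1 0 Xj) X0 add1n subn1.
rewrite -eqr.
set k := \rank _ in ltr *.
have h1 : (2 ^ k * 2 ^ r <= 2 ^ m)%N.
  by rewrite -expnD leq_pexp2l //; lia.
have h2 : (0 < 2 ^ k)%N by rewrite expn_gt0.
have h3 : (0 < 2 ^ r)%N by rewrite expn_gt0.
have H2 : forall x, f (x + a) + f x \in Xj :\ 0.
  move=> x; rewrite !inE hD // andbT rv_char2_eq.
  apply: contra a0 => /eqP /finj /eqP; rewrite -subr_eq0 addrC addKr => /eqP ->.
  by [].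
move=> /(_ H2); rewrite mulnBl mul1n.
move: h1 h2 h3; set P := (2 ^ k)%N; set Q := (2 ^ r)%N; set M := (2 ^ m)%N; lia.
Qed.

Lemma wall0 b m : wall m (set0 : {set 'I_b}) = [set 0].
Proof.
apply/setP => x; rewrite !inE; apply/forallP/eqP => [h|->].
  by apply/row_matrixP => k; rewrite row0; apply/eqP; have := h k; rewrite inE.
by move=> k; rewrite row0 eqxx implybT.
Qed.

Lemma wallT b m : wall m (setT : {set 'I_b}) = setT.
Proof. by apply/setP => x; rewrite !inE; apply/forallP => k; rewrite inE. Qed.

Lemma core b m r (g : {perm 'M['F_2]_(b, m)}) (S : 'I_b -> 'rV['F_2]_m -> 'rV['F_2]_m)
  (hpar : parallel g S) (hg0 : g 0 = 0) (hr : (r < m)%N)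
  (hdu : forall j a c, a != 0 -> (ddt (S j) a c <= 2 ^ r)%N)
  (hai : forall j, strongly_anti_invariant (S j) (r - 1))
  (U X : {set 'M['F_2]_(b, m)}) (U0 : 0 \in U)
  (UD : forall u v, u \in U -> v \in U -> u + v \in U)
  (X0 : 0 \in X) (XD : forall u v, u \in X -> v \in X -> u + v \in X)
  (himg : g @: U = X) (hD : forall x u, u \in U -> g (x + u) + g x \in X) :
  exists J, U = wall m J /\ X = wall m J.
Proof.
pose Uj j := [set v | emb j v \in U].
pose Xj j := [set v | emb j v \in X].
have himgj j : S j @: Uj j = Xj j.
  apply/setP => w; apply/imsetP/idP => [[v]|].
    by rewrite !inE => vU ->; rewrite -(par_emb hpar hg0) -himg imset_f.
  rewrite inE -himg => /imsetP [z zU ez].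
  have ez' : z = emb j (row j z).
    apply/row_matrixP => k; rewrite row_emb; case: eqP => [->//|/eqP kj].
    apply: (par_inj hpar (j := k)); rewrite -hpar -ez row_emb (negbTE kj).
    by rewrite (par_f0 hpar hg0).
  exists (row j z); first by rewrite inE -ez'.
  by apply: (@emb_inj _ _ j); rewrite -(par_emb hpar hg0) -ez'.
have hbr j : Uj j = [set 0] \/ Uj j = setT.
  apply: (brick hr (par_inj hpar (j:=j)) (hdu j) (hai j)) (himgj j) _.
  - by rewrite inE emb0.
  - by move=> u v; rewrite !inE embD; apply: UD.
  - by rewrite inE emb0.
  - by move=> u v; rewrite !inE embD; apply: XD.
  - move=> x a; rewrite !inE => aU.
    have := hD (emb j x) _ aU; rewrite -embD !(par_emb hpar hg0) -embD.
    by [].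
have hd u j : u \in U -> row j u != 0 -> Uj j = setT.
  move=> uU a0; case: (hbr j) => // Uj0.
  have Xj0 : Xj j = [set 0] by rewrite -himgj Uj0 imset_set1 (par_f0 hpar hg0).
  set a := row j u in a0.
  pose D x := S j (x + a) + S j x.
  have [x1 hx1] : exists x1, D x1 != D 0.
    case: (boolP [exists x, D x != D 0]) => [/existsP //|/existsPn h]; exfalso.
    have := hdu j a (D 0) a0.
    have -> : ddt (S j) a (D 0) = (2 ^ m)%N.
      rewrite /ddt -card_rV; apply: eq_card => x.
      by rewrite !inE; have := h x; rewrite negbK.
    by rewrite leq_exp2l // leqNgt hr.
  have wX : (g (emb j x1 + u) + g (emb j x1)) + (g (emb j 0 + u) + g (emb j 0)) \in X.
    by apply: XD; apply: hD.
  have ew : (g (emb j x1 + u) + g (emb j x1)) + (g (emb j 0 + u) + g (emb j 0))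
            = emb j (D x1 + D 0).
    apply/row_matrixP => k; rewrite !rowD' !hpar !rowD' !row_emb.
    case: eqP => [->|_]; first by rewrite /D add0r.
    by rewrite !add0r addxx.
  move: wX; rewrite ew => wX.
  have : D x1 + D 0 \in Xj j by rewrite inE.
  by rewrite Xj0 inE rv_char2_eq (negbTE hx1).
pose J := [set j | Uj j == setT].
have UJ : U = wall m J.
  apply/eqP; rewrite eqEsubset; apply/andP; split; apply/subsetP => x.
    move=> xU; rewrite inE; apply/forallP => k; apply/implyP => kJ.
    apply/negPn/negP => xk; move: kJ; rewrite inE (hd x k xU xk) eqxx.
    by [].
  rewrite inE => /forallP hx; rewrite (mx_decomp x).
  apply: (big_ind (fun y => y \in U)) => //.
  move=> k _; have := hx k; case: (boolP (k \in J)) => [|_ /= /eqP ->].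
    rewrite inE => /eqP hk _; have : row k x \in Uj k by rewrite hk inE.
    by rewrite inE.
  by rewrite emb0.
exists J; split => //.
rewrite -himg UJ; apply/eqP; rewrite eqEcard card_imset ?leqnn ?andbT;
  last exact: perm_inj.
apply/subsetP => y /imsetP [x]; rewrite !inE => /forallP hx ->.
apply/forallP => k; apply/implyP => kJ; rewrite hpar.
by have := hx k; rewrite kJ /= => /eqP ->; rewrite (par_f0 hpar hg0).
Qed.

Definition pimg (T : finType) (t : {perm T}) (P : {set {set T}}) := [set t @: X | X : {set T} in P].

Lemma imsetM (T : finType) (s t : {perm T}) (X : {set T}) : (s * t)%g @: X = t @: (s @: X).
Proof. by rewrite -imset_comp; apply: eq_imset => x; rewrite permM. Qed.

Lemma imset1 (T : finType) (X : {set T}) : (1%g : {perm T}) @: X = X.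
Proof. by rewrite (eq_imset _ (@perm1 T)) imset_id. Qed.

Lemma pimgM (T : finType) (s t : {perm T}) P : pimg (s * t)%g P = pimg t (pimg s P).
Proof. by rewrite /pimg -imset_comp; apply: eq_imset => X /=; rewrite imsetM. Qed.

Lemma pimg1 (T : finType) (P : {set {set T}}) : pimg 1%g P = P.
Proof. by rewrite /pimg (eq_imset _ (@imset1 T)) imset_id. Qed.

Lemma pimgK (T : finType) (t : {perm T}) P : pimg t^-1%g (pimg t P) = P.
Proof. by rewrite -pimgM mulgV pimg1. Qed.

Lemma pimgKV (T : finType) (t : {perm T}) P : pimg t (pimg t^-1%g P) = P.
Proof. by rewrite -pimgM mulVg pimg1. Qed.

Lemma pimg_inj (T : finType) (t : {perm T}) : injective (pimg t).
Proof. exact: can_inj (pimgK t). Qed.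

Lemma imset_permT (T : finType) (t : {perm T}) : t @: [set: T] = setT.
Proof.
apply/eqP; rewrite eqEcard subsetT /= card_imset ?leqnn //; exact: perm_inj.
Qed.

Lemma pimg_part (T : finType) (t : {perm T}) P :
  partition P [set: T] -> partition (pimg t P) setT.
Proof.
case/and3P => /eqP cP tP nP; apply/and3P; split.
- by rewrite /pimg cover_imset -imset_cover cP imset_permT.
- by rewrite /pimg imset_trivIset //; exact: perm_inj.
- apply/imsetP => [[X XP]] /esym/eqP; rewrite (imset_eq0 t) => /eqP X0.
  by move: XP; rewrite X0 (negbTE nP).
Qed.

Lemma pimg_triv (T : finType) (t : {perm T}) P :
  trivial_partition P -> trivial_partition (pimg t P).
Proof.
case=> ->; [left|right]; rewrite /pimg.
  rewrite -imset_comp; apply/setP => Y; apply/imsetP/imsetP => [[x _ ->]|[y _ ->]].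
    by exists (t x); rewrite //= imset_set1.
  by exists (t^-1%g y) => //=; rewrite imset_set1 permKV.
by rewrite imset_set1 imset_permT.
Qed.

Lemma translE b m (v x : 'M['F_2]_(b, m)) : transl v x = x + v.
Proof. by rewrite permE. Qed.


Definition TI b m (P : {set {set 'M['F_2]_(b, m)}}) :=
  partition P setT /\ forall d, pimg (transl d) P = P.

Lemma ti_block b m P (hP : @TI b m P) z x :
  transl x @: pblock P z = pblock P (z + x).
Proof.
case: hP => /and3P [/eqP cP tP nP] hti.
have cov y : y \in cover P by rewrite cP.
apply/esym/def_pblock => //.
  by rewrite -{2}(hti x); apply: imset_f; apply: pblock_mem.
by rewrite -translE; apply: imset_f; rewrite mem_pblock.
Qed.

Lemma ti_mem b m P (hP : @TI b m P) x y : (y \in pblock P x) = (y + x \in pblock P 0).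
Proof.
have := ti_block hP 0 x; rewrite add0r => <-.
apply/imsetP/idP => [[u uU ->]|h]; first by rewrite translE -addrA addxx addr0.
by exists (y + x) => //; rewrite translE -addrA addxx addr0.
Qed.

Lemma ti_0 b m P (hP : @TI b m P) : 0 \in pblock P 0.
Proof. by case: hP => /and3P [/eqP cP _ _] _; rewrite mem_pblock cP. Qed.

Lemma ti_add b m P (hP : @TI b m P) u v :
  u \in pblock P 0 -> v \in pblock P 0 -> u + v \in pblock P 0.
Proof.
move=> uU vU; rewrite -ti_mem //.
case: (hP) => /and3P [_ tP _] _.
by rewrite (same_pblock tP vU).
Qed.

Lemma ti_nontriv b m P (hP : @TI b m P) :
  ~ trivial_partition P -> pblock P 0 != [set 0] /\ pblock P 0 != setT.
Proof.
move=> ntP; case: (hP) => /and3P [/eqP cP tP nP] _.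
have cov y : y \in cover P by rewrite cP.
have defX X : X \in P -> exists2 x, X = pblock P x & x \in X.
  move=> XP; have /set0Pn [x xX] : X != set0 by apply: contraNneq nP => <-.
  by exists x => //; rewrite (def_pblock tP XP xX).
split; apply/negP => /eqP U0; apply: ntP; [left|right]; apply/setP => Y.
  apply/idP/imsetP => [YP|[x _ ->]].
    have [x -> _] := defX Y YP; exists x => //; apply/setP => y.
    by rewrite ti_mem // U0 !inE char2_eq.
  have -> : [set x] = pblock P x.
    by apply/setP => y; rewrite ti_mem // U0 !inE char2_eq.
  exact: pblock_mem.
rewrite inE; apply/idP/eqP => [YP|->].
  have [x -> _] := defX Y YP; apply/setP => y; rewrite ti_mem // U0 !inE.
  by [].
by rewrite -U0; apply: pblock_mem.
Qed.

Lemma pimg_block (T : finType) (G : {perm T}) P P' (hP : partition P setT)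
  (hP' : partition P' setT) (himg : pimg G P = P') x :
  G @: pblock P x = pblock P' (G x).
Proof.
case/and3P: hP => /eqP cP _ _; case/and3P: hP' => /eqP cP' tP' _.
apply/esym/def_pblock => //.
  by rewrite -himg; apply: imset_f; apply: pblock_mem; rewrite cP.
by apply: imset_f; rewrite mem_pblock cP.
Qed.

Lemma G_step b m (G : {perm 'M['F_2]_(b, m)}) P P' (hP : TI P) (hP' : TI P')
  (himg : pimg G P = P') (hG0 : G 0 = 0) :
  G @: pblock P 0 = pblock P' 0 /\
  forall x u, u \in pblock P 0 -> G (x + u) + G x \in pblock P' 0.
Proof.
have blk := pimg_block hP.1 hP'.1 himg.
split; first by rewrite blk hG0.
move=> x u uU; rewrite -ti_mem // -blk; apply: imset_f.
by rewrite ti_mem // addrAC addxx add0r.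
Qed.

Lemma lin_add b m (lam : {perm 'M['F_2]_(b, m)}) (hlin : linear_perm lam) x y :
  lam (x + y) = lam x + lam y.
Proof. by have := hlin 1 x y; rewrite !scale1r. Qed.

Lemma lin_0 b m (lam : {perm 'M['F_2]_(b, m)}) (hlin : linear_perm lam) : lam 0 = 0.
Proof. by rewrite -{1}(addxx 0) lin_add // addxx. Qed.

Lemma round_step b m r (g lam : {perm 'M['F_2]_(b, m)}) S
  (hpar : parallel g S) (hg0 : g 0 = 0) (hlin : linear_perm lam) (hr : (r < m)%N)
  (hdu : forall j a c, a != 0 -> (ddt (S j) a c <= 2 ^ r)%N)
  (hai : forall j, strongly_anti_invariant (S j) (r - 1))
  P P' (hP : TI P) (hP' : TI P') (himg : pimg (g * lam)%g P = P') :
  exists J, pblock P 0 = wall m J /\ lam @: wall m J = pblock P' 0.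
Proof.
have hG0 : (g * lam)%g 0 = 0 by rewrite permM hg0 lin_0.
have [hU hD] := G_step hP hP' himg hG0.
pose X := [set y | lam y \in pblock P' 0].
have gU : g @: pblock P 0 = X.
  apply/setP => y; rewrite inE -hU imsetM mem_imset //; exact: perm_inj.
have [J [UJ XJ]] : exists J, pblock P 0 = wall m J /\ X = wall m J.
  apply: (core hpar hg0 hr hdu hai (ti_0 hP) (ti_add hP) _ _ gU).
  - by rewrite inE lin_0 // ti_0.
  - by move=> u v; rewrite !inE lin_add //; apply: ti_add.
  - by move=> x u uU; rewrite inE lin_add // -!permM; apply: hD.
exists J; split => //.
by rewrite -XJ -gU -imsetM.
Qed.

Lemma transl0 b m : transl (0 : 'M['F_2]_(b, m)) = 1%g.
Proof. by apply/permP => x; rewrite translE perm1 addr0. Qed.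

Lemma chain b m (Qq G2 G3 : {perm 'M['F_2]_(b, m)}) A1 B
  (hA1 : partition A1 setT) (hB : partition B setT)
  (h : forall a c d, pimg Qq (pimg (transl d) (pimg G3 (pimg (transl c)
          (pimg G2 (pimg (transl a) A1))))) = B) :
  let B1 := pimg Qq^-1%g B in let C := pimg G3^-1%g B1 in
  [/\ TI A1, TI C, TI B1, pimg G2 A1 = C & pimg G3 C = B1].
Proof.
move=> B1 C.
have h1 a c d : pimg (transl d) (pimg G3 (pimg (transl c)
          (pimg G2 (pimg (transl a) A1)))) = B1 by rewrite /B1 -(h a c d) pimgK.
have h2 a c : pimg G3 (pimg (transl c) (pimg G2 (pimg (transl a) A1))) = B1.
  by have := h1 a c 0; rewrite transl0 pimg1.
have h3 a c : pimg (transl c) (pimg G2 (pimg (transl a) A1)) = C.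
  by rewrite /C -(h2 a c) pimgK.
have h4 : pimg G2 A1 = C by have := h3 0 0; rewrite !transl0 !pimg1.
have pB1 : partition B1 setT by apply: pimg_part.
have pC : partition C setT by apply: pimg_part.
split => //.
- split => // a; apply: (@pimg_inj _ G2); rewrite h4.
  by have := h3 a 0; rewrite transl0 pimg1.
- split => // c; have := h3 0 c; rewrite transl0 pimg1 h4 => //.
- split => // d; have := h1 0 0 d; rewrite !transl0 !pimg1 h4 /C pimgKV //.
- by rewrite /C pimgKV.
Qed.

Lemma no_parts b m r (Pp Qq g1 lam1 g2 lam2 g3 lam3 : {perm 'M['F_2]_(b, m)})
  S2 S3 (hpar2 : parallel g2 S2) (hpar3 : parallel g3 S3)
  (hg2 : g2 0 = 0) (hg3 : g3 0 = 0) (hl2 : linear_perm lam2) (hl3 : linear_perm lam3)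
  (hr : (r < m)%N)
  (hdu2 : forall j a c, a != 0 -> (ddt (S2 j) a c <= 2 ^ r)%N)
  (hai2 : forall j, strongly_anti_invariant (S2 j) (r - 1))
  (hdu3 : forall j a c, a != 0 -> (ddt (S3 j) a c <= 2 ^ r)%N)
  (hai3 : forall j, strongly_anti_invariant (S3 j) (r - 1))
  (hprop : strongly_proper lam2)
  A B (hA : partition A setT) (hB : partition B setT) (ntB : ~ trivial_partition B)
  (h : forall a c d, pimg (Pp * (g1 * lam1 * transl a) * (g2 * lam2 * transl c)
                          * (g3 * lam3 * transl d) * Qq)%g A = B) : False.
Proof.
pose A1 := pimg lam1 (pimg g1 (pimg Pp A)).
have h' a c d : pimg Qq (pimg (transl d) (pimg (g3 * lam3)%g (pimg (transl c)
          (pimg (g2 * lam2)%g (pimg (transl a) A1))))) = B.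
  by rewrite -(h a c d) !pimgM.
have pA1 : partition A1 setT by rewrite /A1; do 3 apply: pimg_part.
have [tA1 tC tB1 e2 e3] := chain pA1 hB h'.
set B1 := pimg Qq^-1%g B in tB1 e3.
set C := pimg (g3 * lam3)^-1%g B1 in tC e2 e3.
have [J1 [U1 L1]] := round_step hpar2 hg2 hl2 hr hdu2 hai2 tA1 tC e2.
have [J2 [U2 _]] := round_step hpar3 hg3 hl3 hr hdu3 hai3 tC tB1 e3.
have ntC : ~ trivial_partition C.
  move=> /(pimg_triv (g3 * lam3)%g) /(pimg_triv Qq); rewrite e3 /B1 pimgKV.
  exact: ntB.
have [n0 nT] := ti_nontriv tC ntC.
have wJ2 : is_wall_index J2.
  apply/andP; split; apply/eqP => e; [apply: (negP n0) | apply: (negP nT)];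
    by apply/eqP; rewrite U2 e ?wall0 ?wallT.
have wJ1 : is_wall_index J1.
  apply/andP; split; apply/eqP => e; [apply: (negP n0) | apply: (negP nT)];
    apply/eqP; rewrite -L1 e.
  - by rewrite wall0 imset_set1 lin_0.
  - by rewrite wallT imset_permT.
by apply: (hprop J1 J2 wJ1 wJ2); rewrite L1 U2.
Qed.

Definition Fn b m l (g lam : 'I_l -> {perm 'M['F_2]_(b, m)}) (kk : 'I_l -> 'M['F_2]_(b, m))
  (n : nat) : {perm 'M['F_2]_(b, m)} :=
  if insub n is Some h then (g h * lam h * transl (kk h))%g else 1%g.

Lemma enc_split b m l (g lam : 'I_l -> {perm 'M['F_2]_(b, m)}) (kbar kk : 'I_l -> 'M['F_2]_(b, m))
  (i im1 i1 : 'I_l) (hi1 : (1 <= i)%N) (hi2 : (i.+2 <= l)%N)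
  (e1 : val im1 = i.-1) (e2 : val i1 = i.+1)
  (hk : forall h : 'I_l, ~~ (i.-1 <= h <= i.+1)%N -> kk h = kbar h) :
  encryption g lam kk =
  ((\prod_(0 <= n < i.-1) Fn g lam kbar n)
   * (g im1 * lam im1 * transl (kk im1)) * (g i * lam i * transl (kk i))
   * (g i1 * lam i1 * transl (kk i1)) * (\prod_(i.+2 <= n < l) Fn g lam kbar n))%g.
Proof.
rewrite /encryption.
have -> : (\prod_(h < l) (g h * lam h * transl (kk h)))%g = (\prod_(h < l) Fn g lam kk h)%g.
  by apply: eq_bigr => h _; rewrite /Fn valK.
rewrite -(big_mkord xpredT).
rewrite (big_cat_nat _ (n := i.-1)) //=; last by lia.
rewrite (big_cat_nat _ (n := i.+2) (m := i.-1)) //=; last by lia.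
have -> : (\prod_(i.-1 <= n < i.+2) Fn g lam kk n)%g
   = (Fn g lam kk i.-1 * (Fn g lam kk i * (Fn g lam kk i.+1 * 1)))%g.
  rewrite big_ltn; last by lia.
  have -> : (i.-1).+1 = i by lia.
  rewrite big_ltn; last by lia.
  rewrite big_ltn; last by lia.
  by rewrite big_geq.
have -> : (\prod_(0 <= n < i.-1) Fn g lam kk n)%g = (\prod_(0 <= n < i.-1) Fn g lam kbar n)%g.
  apply: eq_big_nat => n /andP [_ hn]; rewrite /Fn.
  case: insubP => [h _ eh|//]; rewrite hk //; apply/negP => /andP [h1 _]. have eh2 : nat_of_ord h = n := eh; lia.
have -> : (\prod_(i.+2 <= n < l) Fn g lam kk n)%g = (\prod_(i.+2 <= n < l) Fn g lam kbar n)%g.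
  apply: eq_big_nat => n /andP [hn _]; rewrite /Fn.
  case: insubP => [h _ eh|//]; rewrite hk //; apply/negP => /andP [_ h1]; have eh2 : nat_of_ord h = n := eh; lia.
rewrite /Fn -e1 -e2 !valK.
by rewrite mulg1 !mulgA.
Qed.

Lemma du_le m (f : 'rV['F_2]_m -> 'rV['F_2]_m) d :
  diff_uniform f d -> forall a c, a != 0 -> (ddt f a c <= d)%N.
Proof. by move=> -> a c a0; apply: (leq_bigmax_cond (a, c)). Qed.

Unset Implicit Arguments. Set Strict Implicit.

Theorem theorem3p3
  (m b l : nat) (hm : (1 < m)%N) (hb : (1 < b)%N)
  (K : finType)
  (g lam : 'I_l -> {perm 'M['F_2]_(b, m)})
  (S : 'I_l -> 'I_b -> 'rV['F_2]_m -> 'rV['F_2]_m)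
  (Phi : K -> 'I_l -> 'M['F_2]_(b, m))
  (hpar : forall h, parallel (g h) (S h))
  (hg0 : forall h, g h 0 = 0)
  (hlin : forall h, linear_perm (lam h))
  (i : 'I_l) (hi1 : (1 <= i)%N) (hi2 : (i.+2 <= l)%N)
  (hPhi : three_round_indep Phi i)
  (r : nat) (hr : (r < m)%N)
  (hS : forall (h : 'I_l) (j : 'I_b), (h == i :> nat) || (h == i.+1 :> nat) ->
          diff_uniform (S h j) (2 ^ r)%N /\ strongly_anti_invariant (S h j) (r - 1)%N)
  (hprop : strongly_proper (lam i)) :
  (~ exists A B : {set {set 'M['F_2]_(b, m)}},
      [/\ partition A setT, partition B setT,
          ~ trivial_partition A, ~ trivial_partition B &
          forall k : K, maps_partition (encryption g lam (Phi k)) A B])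
  /\ [primitive <<[set encryption g lam (Phi k) | k : K]>>, on setT | 'P].
Proof.
have lt1 : (i.-1 < l)%N by lia.
have lt2 : (i.+1 < l)%N by lia.
pose im1 : 'I_l := Ordinal lt1.
pose i1 : 'I_l := Ordinal lt2.
have [kbar hk3] := hPhi.
pose Pp := (\prod_(0 <= n < i.-1) Fn g lam kbar n)%g.
pose Qq := (\prod_(i.+2 <= n < l) Fn g lam kbar n)%g.
have enc_key a c d : exists k, encryption g lam (Phi k) =
   (Pp * (g im1 * lam im1 * transl a) * (g i * lam i * transl c)
    * (g i1 * lam i1 * transl d) * Qq)%g.
  pose k3 (h : 'I_l) := if val h == i.-1 then a else if val h == i then c else d.
  have [k hk] := hk3 k3.
  exists k; rewrite (@enc_split _ _ _ g lam kbar (Phi k) i im1 i1 hi1 hi2 erefl erefl).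
  - have Pim1 : Phi k im1 = a.
      by rewrite hk /k3 /= eqxx; case: ifP => // /negP []; apply/andP; split; lia.
    have Pi : Phi k i = c.
      rewrite hk /k3 /= eqxx; case: ifP => [_|/negP []]; last by apply/andP; split; lia.
      by case: eqP => //; lia.
    have Pi1 : Phi k i1 = d.
      rewrite hk /k3 /=; case: ifP => [_|/negP []]; last by apply/andP; split; lia.
      by case: eqP => [|_]; [lia | case: eqP => //; lia].
    by rewrite Pim1 Pi Pi1.
  - by move=> h /negbTE hh; rewrite hk hh.
have hSi : ((i : nat) == i) || ((i : nat) == i.+1) by rewrite eqxx.
have hSi1 : ((i1 : nat) == i) || ((i1 : nat) == i.+1) by rewrite eqxx orbT.
have part1 : ~ exists A B : {set {set 'M['F_2]_(b, m)}},
      [/\ partition A setT, partition B setT,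
          ~ trivial_partition A, ~ trivial_partition B &
          forall k : K, maps_partition (encryption g lam (Phi k)) A B].
  move=> [A [B [pA pB _ ntB hmap]]].
  apply: (no_parts (Pp := Pp) (Qq := Qq) (g1 := g im1) (lam1 := lam im1)
            (hpar i) (hpar i1) (hg0 i) (hg0 i1) (hlin i) (hlin i1) hr
            _ _ _ _ hprop pA pB ntB).
  - by move=> j; apply: du_le; have [] := hS i j hSi.
  - by move=> j; have [] := hS i j hSi.
  - by move=> j; apply: du_le; have [] := hS i1 j hSi1.
  - by move=> j; have [] := hS i1 j hSi1.
  - by move=> a c d; have [k <-] := enc_key a c d; apply: hmap.
split => //.
set Gs := <<_>>%g.
have inG k : encryption g lam (Phi k) \in Gs by apply: mem_gen; apply: imset_f.
apply/andP; split.
  pose M' := (Pp * (g im1 * lam im1 * transl 0) * (g i * lam i * transl 0) * (g i1 * lam i1))%g.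
  have Eform d k : encryption g lam (Phi k) =
     (Pp * (g im1 * lam im1 * transl 0) * (g i * lam i * transl 0)
      * (g i1 * lam i1 * transl d) * Qq)%g ->
     forall x, encryption g lam (Phi k) x = Qq (M' x + d).
    by move=> -> x; rewrite !permM translE.
  have [k0 e0] := enc_key 0 0 0.
  apply/imsetP; exists (Qq 0); first by rewrite inE.
  apply/setP => w; rewrite inE; apply/esym/orbitP.
  have [kd ed] := enc_key 0 0 (Qq^-1%g w).
  exists ((encryption g lam (Phi k0))^-1 * encryption g lam (Phi kd))%g.
    by rewrite groupM ?groupV ?inG.
  rewrite /= apermE permM.
  set z := _ (Qq 0).
  have hz : M' z = 0.
    have := permKV (encryption g lam (Phi k0)) (Qq 0).
    rewrite -/z (Eform _ _ e0) addr0 => /perm_inj.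
    by [].
  by rewrite (Eform _ _ ed) hz add0r permKV.
apply/existsP => [[Q /and3P [pQ actQ /andP [c1 c2]]]].
apply: part1; exists Q, Q.
have ntQ : ~ trivial_partition Q.
  case => eQ.
    by move: c2; rewrite eQ card_imset ?cardsT ?ltnn //; exact: set1_inj.
  by move: c1; rewrite eQ cards1.
split => // k.
rewrite /maps_partition; apply/eqP; rewrite eqEcard card_imset ?leqnn ?andbT;
  last by apply: imset_inj; exact: perm_inj.
apply/subsetP => Y /imsetP [X XQ ->].
have -> : encryption g lam (Phi k) @: X = ('P^*)%act X (encryption g lam (Phi k)).
  by rewrite /= /setact; apply: eq_imset => x.
by rewrite (actsP actQ) // inG.
Qed.
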